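(* Let $c,N,n,n_1,n_2\in\mathbb{R}$, $D=\{\vec\gamma\in\mathbb{R}^3:\gamma_1^2+\gamma_2^2>0\}$, $\rho=\sqrt{\gamma_1^2+\gamma_2^2}$, and define $\vec\mu$ on $D$ by $$\mu_1=c\Big(-n\gamma_1-n_1\gamma_1^2+2n_1\gamma_2^2+n_1\gamma_3^2-3n_2\gamma_1\gamma_2+\frac{N\gamma_1}{\rho^{3}}\Big),\quad \mu_2=c\Big(-n\gamma_2+2n_2\gamma_1^2-n_2\gamma_2^2+n_2\gamma_3^2-3n_1\gamma_1\gamma_2+\frac{N\gamma_2}{\rho^{3}}\Big),$$ $$\mu_3=-c\gamma_3\Big(3n+5n_1\gamma_1+5n_2\gamma_2+\frac{N\gamma_3}{\rho}\Big).$$ Then $\Pi_{\vec\mu}$ defines a Poisson bracket on $\mathbb{R}^3\times D$, and $$C(\vec M,\vec\gamma)=\vec M\cdot\vec\gamma+c(n+n_1\gamma_1+n_2\gamma_2)(2\gamma_1^2+2\gamma_2^2+\gamma_3^2)+\tfrac12cN\Big(\frac{\gamma_3\rho^2-2}{\rho}-|\vec\gamma|^2\arctan\frac{\gamma_3}{\rho}\Big)$$ is a Casimir function of $\Pi_{\vec\mu}$.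
   Context: Coordinates on $\mathbb{R}^6$ are $(\vec M,\vec\gamma)=(M_1,M_2,M_3,\gamma_1,\gamma_2,\gamma_3)$. For a smooth $\vec\mu=(\mu_1,\mu_2,\mu_3)$ of $(\vec M,\vec\gamma)$, $\Pi_{\vec\mu}$ is the skew-symmetric $6\times6$ matrix $$\Pi_{\vec\mu}=\begin{bmatrix}0&-M_3-\mu_3&M_2+\mu_2&0&-\gamma_3&\gamma_2\\ M_3+\mu_3&0&-M_1-\mu_1&\gamma_3&0&-\gamma_1\\ -M_2-\mu_2&M_1+\mu_1&0&-\gamma_2&\gamma_1&0\\ 0&-\gamma_3&\gamma_2&0&0&0\\ \gamma_3&0&-\gamma_1&0&0&0\\ -\gamma_2&\gamma_1&0&0&0&0\end{bmatrix},$$ it ''defines a Poisson bracket'' if $\{f,g\}_{\vec\mu}=(\nabla f)^T\Pi_{\vec\mu}\nabla g$ satisfies the Jacobi identity, and a Casimir function is a smooth $C$ with $\Pi_{\vec\mu}\nabla C=0$. *)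

(* Defs.v *)
From Stdlib Require Import Reals Lra ClassicalEpsilon.
Open Scope R_scope.

(* Points of R^6 = (M1,M2,M3,g1,g2,g3) are encoded as x : nat -> R with
   x 0 = M1, x 1 = M2, x 2 = M3, x 3 = g1, x 4 = g2, x 5 = g3;
   coordinates >= 6 are inert (never perturbed). *)
Definition pt := nat -> R.

Definition upd (x : pt) (i : nat) (t : R) : pt :=
  fun j => if Nat.eqb j i then t else x j.

Definition has_pd (i : nat) (f : pt -> R) (x : pt) : Prop :=
  exists l, derivable_pt_lim (fun t => f (upd x i t)) (x i) l.

Definition pd (i : nat) (f : pt -> R) (x : pt) : R :=
  epsilon (inhabits 0) (fun l => derivable_pt_lim (fun t => f (upd x i t)) (x i) l).

Definition cont_at (f : pt -> R) (x : pt) : Prop :=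
  forall eps, 0 < eps -> exists d, 0 < d /\
    forall y : pt, (forall i, (i < 6)%nat -> Rabs (y i - x i) < d) ->
      (forall i, (6 <= i)%nat -> y i = x i) -> Rabs (f y - f x) < eps.

Fixpoint Ck (U : pt -> Prop) (k : nat) (f : pt -> R) : Prop :=
  match k with
  | O => forall x, U x -> cont_at f x
  | S k' => (forall x, U x -> cont_at f x) /\
            forall i, (i < 6)%nat ->
              (forall x, U x -> has_pd i f x) /\ Ck U k' (pd i f)
  end.

Definition smooth_on (U : pt -> Prop) (f : pt -> R) : Prop := forall k, Ck U k f.

Definition Pi (mu1 mu2 mu3 : pt -> R) (x : pt) (i j : nat) : R :=
  let M1 := x 0%nat in let M2 := x 1%nat in let M3 := x 2%nat in
  let g1 := x 3%nat in let g2 := x 4%nat in let g3 := x 5%nat in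
  match (i, j) with
  | (0, 1)%nat => - M3 - mu3 x | (0, 2)%nat => M2 + mu2 x
  | (0, 4)%nat => - g3 | (0, 5)%nat => g2
  | (1, 0)%nat => M3 + mu3 x | (1, 2)%nat => - M1 - mu1 x
  | (1, 3)%nat => g3 | (1, 5)%nat => - g1
  | (2, 0)%nat => - M2 - mu2 x | (2, 1)%nat => M1 + mu1 x
  | (2, 3)%nat => - g2 | (2, 4)%nat => g1
  | (3, 1)%nat => - g3 | (3, 2)%nat => g2
  | (4, 0)%nat => g3 | (4, 2)%nat => - g1
  | (5, 0)%nat => - g2 | (5, 1)%nat => g1
  | _ => 0
  end.

Definition bracket (P : pt -> nat -> nat -> R) (f g : pt -> R) (x : pt) : R :=
  sum_f_R0 (fun i => sum_f_R0 (fun j => pd i f x * P x i j * pd j g x) 5) 5.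

Definition Poisson_on (U : pt -> Prop) (P : pt -> nat -> nat -> R) : Prop :=
  forall f g h, smooth_on U f -> smooth_on U g -> smooth_on U h ->
    forall x, U x ->
      bracket P f (bracket P g h) x + bracket P g (bracket P h f) x
      + bracket P h (bracket P f g) x = 0.

Definition Casimir_on (U : pt -> Prop) (P : pt -> nat -> nat -> R) (C : pt -> R) : Prop :=
  smooth_on U C /\
  forall x, U x -> forall i, (i < 6)%nat ->
    sum_f_R0 (fun j => P x i j * pd j C x) 5 = 0.

Definition Dom (x : pt) : Prop := x 3%nat ^ 2 + x 4%nat ^ 2 > 0.

Definition rho (x : pt) : R := sqrt (x 3%nat ^ 2 + x 4%nat ^ 2).

Definition mu1 (c N n n1 n2 : R) (x : pt) : R :=
  let g1 := x 3%nat in let g2 := x 4%nat in let g3 := x 5%nat in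
  c * (- n * g1 - n1 * g1 ^ 2 + 2 * n1 * g2 ^ 2 + n1 * g3 ^ 2 - 3 * n2 * g1 * g2
       + N * g1 / rho x ^ 3).

Definition mu2 (c N n n1 n2 : R) (x : pt) : R :=
  let g1 := x 3%nat in let g2 := x 4%nat in let g3 := x 5%nat in
  c * (- n * g2 + 2 * n2 * g1 ^ 2 - n2 * g2 ^ 2 + n2 * g3 ^ 2 - 3 * n1 * g1 * g2
       + N * g2 / rho x ^ 3).

Definition mu3 (c N n n1 n2 : R) (x : pt) : R :=
  let g1 := x 3%nat in let g2 := x 4%nat in let g3 := x 5%nat in
  - c * g3 * (3 * n + 5 * n1 * g1 + 5 * n2 * g2 + N * g3 / rho x).

Definition Cas (c N n n1 n2 : R) (x : pt) : R :=
  let M1 := x 0%nat in let M2 := x 1%nat in let M3 := x 2%nat in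
  let g1 := x 3%nat in let g2 := x 4%nat in let g3 := x 5%nat in
  M1 * g1 + M2 * g2 + M3 * g3
  + c * (n + n1 * g1 + n2 * g2) * (2 * g1 ^ 2 + 2 * g2 ^ 2 + g3 ^ 2)
  + / 2 * c * N * ((g3 * rho x ^ 2 - 2) / rho x
                   - (g1 ^ 2 + g2 ^ 2 + g3 ^ 2) * atan (g3 / rho x)).

(* Main.v *)
Require Import Defs.
From Stdlib Require Import Reals Lra Lia FunctionalExtensionality ClassicalEpsilon.
Open Scope R_scope.

Lemma upd_eq (y : pt) i v : upd y i v i = v.
Proof. unfold upd. rewrite Nat.eqb_refl. reflexivity. Qed.

Lemma upd_neq (y : pt) i v m : m <> i -> upd y i v m = y m.
Proof. intro H. unfold upd. destruct (Nat.eqb_spec m i); [contradiction|reflexivity]. Qed.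

Lemma upd_same (x : pt) i : upd x i (x i) = x.
Proof. apply functional_extensionality. intro m. unfold upd.
  destruct (Nat.eqb_spec m i); subst; reflexivity. Qed.

Lemma upd_upd (x : pt) i s t : upd (upd x i s) i t = upd x i t.
Proof. apply functional_extensionality. intro m. unfold upd.
  destruct (Nat.eqb_spec m i); reflexivity. Qed.

Lemma upd_comm (x : pt) i j s t : i <> j -> upd (upd x i s) j t = upd (upd x j t) i s.
Proof. intro H. apply functional_extensionality. intro m. unfold upd.
  destruct (Nat.eqb_spec m j); destruct (Nat.eqb_spec m i); subst; try reflexivity. contradiction. Qed.

Lemma pd_spec i f x : has_pd i f x ->
  derivable_pt_lim (fun t => f (upd x i t)) (x i) (pd i f x).
Proof. intros [l Hl]. unfold pd.
  apply (epsilon_spec (inhabits 0) (fun l => derivable_pt_lim (fun t => f (upd x i t)) (x i) l)).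
  exists l; exact Hl. Qed.

Lemma pd_unique i f x l :
  derivable_pt_lim (fun t => f (upd x i t)) (x i) l -> pd i f x = l.
Proof. intro H. assert (Hh : has_pd i f x) by (exists l; exact H).
  apply (uniqueness_limite _ _ _ _ (pd_spec _ _ _ Hh) H). Qed.

Lemma dlim_eq f x l l' : derivable_pt_lim f x l -> l = l' -> derivable_pt_lim f x l'.
Proof. intros H E; subst; exact H. Qed.

Lemma dlim_fext f g x l : (forall t, f t = g t) -> derivable_pt_lim f x l -> derivable_pt_lim g x l.
Proof. intros E H. replace g with f; [exact H|]. apply functional_extensionality; exact E. Qed.

Definition openU (U : pt -> Prop) : Prop :=
  forall x, U x -> exists d, 0 < d /\ forall y, (forall m, (m < 6)%nat -> Rabs (y m - x m) < d) -> U y.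

Lemma dlim_local f g a l d : 0 < d -> (forall t, Rabs (t - a) < d -> f t = g t) ->
  derivable_pt_lim f a l -> derivable_pt_lim g a l.
Proof.
  intros Hd E H eps Heps. destruct (H eps Heps) as [del Hdel].
  assert (Hm : 0 < Rmin del d) by (apply Rmin_pos; [apply cond_pos|exact Hd]).
  exists (mkposreal _ Hm). intros h Hh0 Hh. simpl in Hh.
  rewrite <- (E (a + h)), <- (E a).
  - apply Hdel; auto. apply Rlt_le_trans with (1 := Hh). apply Rmin_l.
  - replace (a - a) with 0 by ring. rewrite Rabs_R0. exact Hd.
  - replace (a + h - a) with h by ring. apply Rlt_le_trans with (1 := Hh). apply Rmin_r.
Qed.

Lemma cont_local f g x d : 0 < d ->
  (forall y, (forall m, (m < 6)%nat -> Rabs (y m - x m) < d) -> f y = g y) ->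
  cont_at f x -> cont_at g x.
Proof.
  intros Hd E H eps Heps. destruct (H eps Heps) as [del [Hdel Hy]].
  exists (Rmin del d). split; [apply Rmin_pos; lra|].
  intros y H1 H2.
  assert (Ex : f x = g x). { apply E. intros m _. replace (x m - x m) with 0 by ring. rewrite Rabs_R0; lra. }
  rewrite <- Ex, <- E.
  - apply Hy; auto. intros m Hm. apply Rlt_le_trans with (1 := H1 m Hm). apply Rmin_l.
  - intros m Hm. apply Rlt_le_trans with (1 := H1 m Hm). apply Rmin_r.
Qed.

Lemma upd_box (x : pt) i t d : 0 < d -> Rabs (t - x i) < d ->
  forall m, Rabs (upd x i t m - x m) < d.
Proof. intros Hd Ht m. unfold upd. destruct (Nat.eqb_spec m i).
  - subst; exact Ht.
  - replace (x m - x m) with 0 by ring. rewrite Rabs_R0; lra. Qed.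

Lemma Ck_ext U (HU : openU U) k : forall f g, (forall x, U x -> f x = g x) -> Ck U k f -> Ck U k g.
Proof.
  induction k as [|k IH]; intros f g E Hf.
  - simpl in *. intros x Hx. destruct (HU x Hx) as [d [Hd Hbox]].
    apply (cont_local f g x d Hd); auto.
  - simpl in *. destruct Hf as [Hc Hp]. split.
    + intros x Hx. destruct (HU x Hx) as [d [Hd Hbox]].
      apply (cont_local f g x d Hd); auto.
    + intros i Hi. destruct (Hp i Hi) as [Hh Hk].
      assert (Hloc : forall x, U x -> derivable_pt_lim (fun t => g (upd x i t)) (x i) (pd i f x)).
      { intros x Hx. destruct (HU x Hx) as [d [Hd Hbox]].
        apply (dlim_local (fun t => f (upd x i t)) _ _ _ d Hd).
        - intros t Ht. apply E. apply Hbox. intros m _. apply upd_box; auto.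
        - apply pd_spec. apply Hh; exact Hx. }
      split.
      * intros x Hx. exists (pd i f x). apply Hloc; exact Hx.
      * apply (IH (pd i f)); auto.
        intros x Hx. symmetry. apply pd_unique. apply Hloc; exact Hx.
Qed.

Lemma Ck_mono U k : forall f, Ck U (S k) f -> Ck U k f.
Proof.
  induction k as [|k IH]; intros f Hf.
  - simpl in *. tauto.
  - simpl in Hf |- *. destruct Hf as [Hc Hp]. split; [exact Hc|].
    intros i Hi. destruct (Hp i Hi) as [Hh Hk]. split; [exact Hh|]. apply IH; exact Hk.
Qed.

Lemma Ck_cont U k f x : Ck U k f -> U x -> cont_at f x.
Proof. destruct k; simpl; [auto| intros [H _]; auto]. Qed.

Lemma Dom_open : openU Dom.
Proof.
  intros x Hx. unfold Dom in Hx.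
  destruct (Req_dec (x 3%nat) 0) as [H3|H3].
  - assert (H4 : x 4%nat <> 0).
    { intro H4. rewrite H3, H4 in Hx. lra. }
    exists (Rabs (x 4%nat)). split; [apply Rabs_pos_lt; exact H4|].
    intros y Hy. specialize (Hy 4%nat ltac:(lia)). unfold Dom.
    assert (y 4%nat <> 0). { intro E. rewrite E in Hy. rewrite Rminus_0_l, Rabs_Ropp in Hy. lra. }
    assert (0 < y 4%nat ^ 2) by (rewrite <- Rsqr_pow2; apply Rsqr_pos_lt; auto).
    pose proof (pow2_ge_0 (y 3%nat)). lra.
  - exists (Rabs (x 3%nat)). split; [apply Rabs_pos_lt; exact H3|].
    intros y Hy. specialize (Hy 3%nat ltac:(lia)). unfold Dom.
    assert (y 3%nat <> 0). { intro E. rewrite E in Hy. rewrite Rminus_0_l, Rabs_Ropp in Hy. lra. }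
    assert (0 < y 3%nat ^ 2) by (rewrite <- Rsqr_pow2; apply Rsqr_pos_lt; auto).
    pose proof (pow2_ge_0 (y 4%nat)). lra.
Qed.

Inductive ex : Type :=
| EC (r : R) | EV (m : nat) | EAdd (a b : ex) | EMul (a b : ex) | EOpp (a : ex)
| EInv (a : ex) | EPow (a : ex) (k : nat) | ESqrt (a : ex) | EAtan (a : ex).

Fixpoint eval (e : ex) (x : pt) : R :=
  match e with
  | EC r => r
  | EV m => x m
  | EAdd a b => eval a x + eval b x
  | EMul a b => eval a x * eval b x
  | EOpp a => - eval a x
  | EInv a => / eval a x
  | EPow a k => eval a x ^ k
  | ESqrt a => sqrt (eval a x)
  | EAtan a => atan (eval a x)
  end.

Fixpoint deriv (e : ex) (i : nat) : ex :=
  match e with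
  | EC _ => EC 0
  | EV m => EC (if Nat.eqb m i then 1 else 0)
  | EAdd a b => EAdd (deriv a i) (deriv b i)
  | EMul a b => EAdd (EMul (deriv a i) b) (EMul a (deriv b i))
  | EOpp a => EOpp (deriv a i)
  | EInv a => EOpp (EMul (deriv a i) (EMul (EInv a) (EInv a)))
  | EPow a k => EMul (EMul (EC (INR k)) (EPow a (pred k))) (deriv a i)
  | ESqrt a => EMul (deriv a i) (EInv (EMul (EC 2) (ESqrt a)))
  | EAtan a => EMul (deriv a i) (EInv (EAdd (EC 1) (EPow a 2)))
  end.

Fixpoint good (e : ex) (x : pt) : Prop :=
  match e with
  | EC _ | EV _ => True
  | EAdd a b | EMul a b => good a x /\ good b x
  | EOpp a | EPow a _ | EAtan a => good a x
  | EInv a => good a x /\ eval a x <> 0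
  | ESqrt a => good a x /\ 0 < eval a x
  end.

Lemma good_deriv e i x : good e x -> good (deriv e i) x.
Proof.
  induction e; simpl; intros; try tauto.
  - destruct H as [Ha Hp]. repeat split; auto.
    apply Rmult_integral_contrapositive; split; [lra|]. apply Rgt_not_eq, sqrt_lt_R0; auto.
  - repeat split; auto. pose proof (pow2_ge_0 (eval e x)). simpl in *. lra.
Qed.

Lemma cont_fext f g x : (forall y, f y = g y) -> cont_at f x -> cont_at g x.
Proof. intros E H. replace g with f; auto. apply functional_extensionality; auto. Qed.

Lemma cont_const r x : cont_at (fun _ => r) x.
Proof. intros eps He. exists 1. split; [lra|]. intros. replace (r - r) with 0 by ring. rewrite Rabs_R0; lra. Qed.

Lemma cont_proj m x : cont_at (fun y => y m) x.
Proof. intros eps He. exists eps. split; [lra|]. intros y H1 H2.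
  destruct (Nat.lt_ge_cases m 6) as [Hm|Hm]; [apply H1; auto|].
  rewrite (H2 m Hm). replace (x m - x m) with 0 by ring. rewrite Rabs_R0; lra. Qed.

Lemma cont_plus f g x : cont_at f x -> cont_at g x -> cont_at (fun y => f y + g y) x.
Proof.
  intros Hf Hg eps He. destruct (Hf (eps/2) ltac:(lra)) as [d1 [Hd1 H1]].
  destruct (Hg (eps/2) ltac:(lra)) as [d2 [Hd2 H2]].
  exists (Rmin d1 d2). split; [apply Rmin_pos; lra|]. intros y Hy Hy'.
  assert (A1 : Rabs (f y - f x) < eps/2).
  { apply H1; auto. intros m Hm. apply Rlt_le_trans with (1 := Hy m Hm); apply Rmin_l. }
  assert (A2 : Rabs (g y - g x) < eps/2).
  { apply H2; auto. intros m Hm. apply Rlt_le_trans with (1 := Hy m Hm); apply Rmin_r. }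
  replace (f y + g y - (f x + g x)) with ((f y - f x) + (g y - g x)) by ring.
  eapply Rle_lt_trans; [apply Rabs_triang|]. lra.
Qed.

Lemma cont_comp (h : R -> R) f x : continuity_pt h (f x) -> cont_at f x -> cont_at (fun y => h (f y)) x.
Proof.
  intros Hh Hf eps He. destruct (Hh eps He) as [a [Ha Hx]].
  destruct (Hf a Ha) as [d [Hd Hy]]. exists d. split; auto. intros y H1 H2.
  specialize (Hy y H1 H2).
  destruct (Req_dec (f y) (f x)) as [E|E].
  - rewrite E. replace (h (f x) - h (f x)) with 0 by ring. rewrite Rabs_R0; lra.
  - apply (Hx (f y)). split; [split; [exact I| auto]|]. exact Hy.
Qed.

Lemma cont_of_dlim h x l : derivable_pt_lim h x l -> continuity_pt h x.
Proof. intro H. apply derivable_continuous_pt. exists l; exact H. Qed.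

Lemma D_inv_id y : y <> 0 -> derivable_pt_lim (fun t => / t) y (- / (y * y)).
Proof.
  intro Hy. eapply dlim_eq.
  - apply (dlim_fext (fct_cte 1 / id)%F).
    + intro t. unfold div_fct, fct_cte, id. unfold Rdiv. ring.
    + apply derivable_pt_lim_div; [apply derivable_pt_lim_const|apply derivable_pt_lim_id|exact Hy].
  - unfold fct_cte, id, Rsqr. field. exact Hy.
Qed.

Lemma cont_opp f x : cont_at f x -> cont_at (fun y => - f y) x.
Proof. intro H. apply (cont_comp (fun t => - t)); auto.
  apply (cont_of_dlim _ _ (-1)). apply (derivable_pt_lim_opp id). apply derivable_pt_lim_id. Qed.

Lemma cont_pow f x k : cont_at f x -> cont_at (fun y => f y ^ k) x.
Proof. intro H. apply (cont_comp (fun t => t ^ k)); auto.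
  eapply cont_of_dlim. apply derivable_pt_lim_pow. Qed.

Lemma cont_scal r f x : cont_at f x -> cont_at (fun y => r * f y) x.
Proof. intro H. apply (cont_comp (fun t => r * t)); auto.
  apply (cont_of_dlim _ _ (r * 1)). apply (derivable_pt_lim_scal id). apply derivable_pt_lim_id. Qed.

Lemma cont_mult f g x : cont_at f x -> cont_at g x -> cont_at (fun y => f y * g y) x.
Proof.
  intros Hf Hg.
  apply (cont_fext (fun y => / 4 * ((f y + g y) ^ 2 + - (f y + - g y) ^ 2))).
  - intro y. field.
  - apply cont_scal. apply cont_plus.
    + apply cont_pow. apply cont_plus; auto.
    + apply cont_opp. apply cont_pow. apply cont_plus; auto. apply cont_opp; auto.
Qed.

Lemma cont_eval e x : good e x -> cont_at (eval e) x.
Proof.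
  induction e; simpl; intro G.
  - apply cont_const.
  - apply cont_proj.
  - apply cont_plus; tauto.
  - apply cont_mult; tauto.
  - apply cont_opp; tauto.
  - destruct G as [Ga Gn]. apply (cont_comp (fun t => / t)); auto.
    eapply cont_of_dlim. apply D_inv_id. exact Gn.
  - apply cont_pow; auto.
  - destruct G as [Ga Gp]. apply (cont_comp sqrt); auto. apply continuity_pt_sqrt; lra.
  - apply (cont_comp atan); auto. eapply cont_of_dlim. apply derivable_pt_lim_atan.
Qed.

Lemma D_comp f h a b l l2 : derivable_pt_lim f a l -> f a = b -> derivable_pt_lim h b l2 ->
  derivable_pt_lim (fun t => h (f t)) a (l2 * l).
Proof. intros H1 E H2. subst b. apply (derivable_pt_lim_comp f h); auto. Qed.

Lemma line_deriv e i x : good e x ->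
  derivable_pt_lim (fun t => eval e (upd x i t)) (x i) (eval (deriv e i) x).
Proof.
  induction e; simpl; intro G.
  - apply derivable_pt_lim_const.
  - unfold upd. destruct (Nat.eqb m i).
    + apply derivable_pt_lim_id.
    + apply derivable_pt_lim_const.
  - apply (derivable_pt_lim_plus (fun t => eval e1 (upd x i t)) (fun t => eval e2 (upd x i t))); [apply IHe1|apply IHe2]; tauto.
  - eapply dlim_eq.
    + apply (derivable_pt_lim_mult (fun t => eval e1 (upd x i t)) (fun t => eval e2 (upd x i t))); [apply IHe1|apply IHe2]; tauto.
    + rewrite upd_same. reflexivity.
  - apply (derivable_pt_lim_opp (fun t => eval e (upd x i t))); apply IHe; tauto.
  - destruct G as [Ga Gn]. eapply dlim_eq.
    + eapply D_comp; [apply IHe; auto| rewrite upd_same; reflexivity| apply D_inv_id; exact Gn].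
    + field; exact Gn.
  - eapply dlim_eq.
    + eapply (D_comp _ (fun y => y ^ k)); [apply IHe; auto| rewrite upd_same; reflexivity| apply derivable_pt_lim_pow].
    + ring.
  - destruct G as [Ga Gp]. eapply dlim_eq.
    + eapply D_comp; [apply IHe; auto| rewrite upd_same; reflexivity| apply derivable_pt_lim_sqrt; exact Gp].
    + ring.
  - eapply dlim_eq.
    + eapply D_comp; [apply IHe; auto| rewrite upd_same; reflexivity| apply derivable_pt_lim_atan].
    + simpl; ring.
Qed.

Lemma pd_eval e i x : good e x -> pd i (eval e) x = eval (deriv e i) x.
Proof. intro G. apply pd_unique. apply line_deriv; auto. Qed.

Lemma smooth_eval U (HU : openU U) e : (forall x, U x -> good e x) -> forall k, Ck U k (eval e).
Proof.
  intros G k. revert e G. induction k as [|k IH]; intros e G.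
  - simpl. intros x Hx. apply cont_eval; auto.
  - simpl. split.
    + intros x Hx. apply cont_eval; auto.
    + intros i Hi. split.
      * intros x Hx. exists (eval (deriv e i) x). apply line_deriv; auto.
      * apply (Ck_ext U HU k (eval (deriv e i))).
        -- intros x Hx. symmetry. apply pd_eval; auto.
        -- apply IH. intros x Hx. apply good_deriv; auto.
Qed.

Lemma eq_of_close u v : (forall eps, 0 < eps -> Rabs (u - v) < eps) -> u = v.
Proof.
  intro H. destruct (Req_dec u v) as [E|E]; auto.
  assert (Hp : 0 < Rabs (u - v)) by (apply Rabs_pos_lt; lra).
  specialize (H _ Hp). lra.
Qed.

Section Schwarz.
Variables (U : pt -> Prop) (HU : openU U) (x : pt) (i j : nat).
Hypothesis (Hij : i <> j) (Hi : (i < 6)%nat) (Hj : (j < 6)%nat).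

Let Q s t := upd (upd x i s) j t.

Lemma Q_box s t r : 0 < r -> Rabs (s - x i) < r -> Rabs (t - x j) < r ->
  forall m, Rabs (Q s t m - x m) < r.
Proof.
  intros Hr Hs Ht m. unfold Q, upd.
  destruct (Nat.eqb_spec m j); [subst; auto|].
  destruct (Nat.eqb_spec m i); [subst; auto|].
  replace (x m - x m) with 0 by ring. rewrite Rabs_R0; lra.
Qed.

Lemma Q_far s t m : (6 <= m)%nat -> Q s t m = x m.
Proof. intro H. unfold Q. rewrite upd_neq by lia. rewrite upd_neq by lia. reflexivity. Qed.

Lemma Q_i s t : Q s t i = s.
Proof. unfold Q. rewrite upd_neq by auto. apply upd_eq. Qed.

Lemma Q_j s t : Q s t j = t.
Proof. unfold Q. apply upd_eq. Qed.

Lemma Q_updi s t s' : upd (Q s t) i s' = Q s' t.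
Proof. unfold Q. rewrite upd_comm by auto. rewrite upd_upd. reflexivity. Qed.

Lemma Q_updj s t t' : upd (Q s t) j t' = Q s t'.
Proof. unfold Q. apply upd_upd. Qed.

Lemma dS g s t : has_pd i g (Q s t) ->
  derivable_pt_lim (fun s' => g (Q s' t)) s (pd i g (Q s t)).
Proof.
  intro H. pose proof (pd_spec i g (Q s t) H) as D. rewrite Q_i in D.
  apply (dlim_fext (fun s' => g (upd (Q s t) i s'))); auto.
  intro s'. rewrite Q_updi. reflexivity.
Qed.

Lemma dT g s t : has_pd j g (Q s t) ->
  derivable_pt_lim (fun t' => g (Q s t')) t (pd j g (Q s t)).
Proof.
  intro H. pose proof (pd_spec j g (Q s t) H) as D. rewrite Q_j in D.
  apply (dlim_fext (fun t' => g (upd (Q s t) j t'))); auto.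
  intro t'. rewrite Q_updj. reflexivity.
Qed.

Lemma Q_in d s t : (forall y, (forall m, (m < 6)%nat -> Rabs (y m - x m) < d) -> U y) -> 0 < d ->
  Rabs (s - x i) < d -> Rabs (t - x j) < d -> U (Q s t).
Proof. intros Hb Hd Hs Ht. apply Hb. intros m _. apply Q_box; auto. Qed.

Lemma schwarz_ne f : Ck U 2 f -> U x -> pd i (pd j f) x = pd j (pd i f) x.
Proof.
  intros Hf Hx. simpl in Hf. destruct Hf as [_ Hf].
  destruct (Hf i Hi) as [Hpi [_ Hi2]]. destruct (Hf j Hj) as [Hpj [_ Hj2]].
  destruct (Hi2 j Hj) as [Hpji Cji]. destruct (Hj2 i Hi) as [Hpij Cij].
  destruct (HU x Hx) as [d [Hd Hb]].
  set (a := x i). set (b := x j).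
  assert (Key : forall h, 0 < h < d -> exists s1 t1 s2 t2,
     a < s1 < a + h /\ b < t1 < b + h /\ a < s2 < a + h /\ b < t2 < b + h /\
     pd j (pd i f) (Q s1 t1) = pd i (pd j f) (Q s2 t2)).
  { intros h [Hh0 Hhd].
    assert (In : forall s t, a <= s <= a + h -> b <= t <= b + h -> U (Q s t)).
    { intros s t Hs Ht. apply (Q_in d); auto.
      - unfold a in *. apply Rabs_def1; lra.
      - unfold b in *. apply Rabs_def1; lra. }
    destruct (MVT_cor2 (fun s => f (Q s (b + h)) - f (Q s b))
                (fun s => pd i f (Q s (b + h)) - pd i f (Q s b)) a (a + h)) as [s1 [E1 Hs1]].
    { lra. }
    { intros c Hc. apply (derivable_pt_lim_minus (fun s => f (Q s (b + h))) (fun s => f (Q s b)));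
      apply dS; apply Hpi; apply In; lra. }
    destruct (MVT_cor2 (fun t => pd i f (Q s1 t)) (fun t => pd j (pd i f) (Q s1 t)) b (b + h))
      as [t1 [E2 Ht1]].
    { lra. }
    { intros c Hc. apply dT. apply Hpji. apply In; lra. }
    destruct (MVT_cor2 (fun t => f (Q (a + h) t) - f (Q a t))
                (fun t => pd j f (Q (a + h) t) - pd j f (Q a t)) b (b + h)) as [t2 [E3 Ht2]].
    { lra. }
    { intros c Hc. apply (derivable_pt_lim_minus (fun t => f (Q (a + h) t)) (fun t => f (Q a t)));
      apply dT; apply Hpj; apply In; lra. }
    destruct (MVT_cor2 (fun s => pd j f (Q s t2)) (fun s => pd i (pd j f) (Q s t2)) a (a + h))
      as [s2 [E4 Hs2]].
    { lra. }
    { intros c Hc. apply dS. apply Hpij. apply In; lra. }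
    exists s1, t1, s2, t2. repeat split; try lra.
    assert (Hhh : h * h <> 0) by (apply Rmult_integral_contrapositive; split; lra).
    apply (Rmult_eq_reg_l (h * h)); auto.
    replace (a + h - a) with h in * by ring. replace (b + h - b) with h in * by ring.
    transitivity (h * (pd i f (Q s1 (b + h)) - pd i f (Q s1 b))).
    { rewrite E2. ring. }
    transitivity (h * (pd j f (Q (a + h) t2) - pd j f (Q a t2))).
    2: { rewrite E4. ring. }
    transitivity (f (Q (a + h) (b + h)) - f (Q (a + h) b) - (f (Q a (b + h)) - f (Q a b))).
    { rewrite E1. ring. }
    transitivity (f (Q (a + h) (b + h)) - f (Q a (b + h)) - (f (Q (a + h) b) - f (Q a b))).
    { ring. }
    rewrite E3. ring. }
  symmetry. apply eq_of_close. intros eps Heps.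
  destruct (Cji x Hx (eps / 2) ltac:(lra)) as [d1 [Hd1 C1]].
  destruct (Cij x Hx (eps / 2) ltac:(lra)) as [d2 [Hd2 C2]].
  set (r := Rmin d (Rmin d1 d2)).
  assert (Hr : 0 < r) by (unfold r; repeat apply Rmin_pos; lra).
  assert (Hrd : r <= d) by apply Rmin_l.
  assert (Hr1 : r <= d1) by (unfold r; eapply Rle_trans; [apply Rmin_r|apply Rmin_l]).
  assert (Hr2 : r <= d2) by (unfold r; eapply Rle_trans; [apply Rmin_r|apply Rmin_r]).
  destruct (Key (r / 2) ltac:(lra)) as [s1 [t1 [s2 [t2 [Hs1 [Ht1 [Hs2 [Ht2 E]]]]]]]].
  assert (A1 : Rabs (pd j (pd i f) (Q s1 t1) - pd j (pd i f) x) < eps / 2).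
  { apply C1.
    - intros m Hm. apply Q_box; try lra; unfold a, b in *; apply Rabs_def1; lra.
    - intros m Hm. apply Q_far; auto. }
  assert (A2 : Rabs (pd i (pd j f) (Q s2 t2) - pd i (pd j f) x) < eps / 2).
  { apply C2.
    - intros m Hm. apply Q_box; try lra; unfold a, b in *; apply Rabs_def1; lra.
    - intros m Hm. apply Q_far; auto. }
  rewrite E in A1.
  replace (pd j (pd i f) x - pd i (pd j f) x) with
    ((pd i (pd j f) (Q s2 t2) - pd i (pd j f) x) - (pd i (pd j f) (Q s2 t2) - pd j (pd i f) x)) by ring.
  eapply Rle_lt_trans; [apply Rabs_triang|]. rewrite Rabs_Ropp.
  lra.
Qed.

End Schwarz.

Lemma schwarz U f x i j : openU U -> Ck U 2 f -> U x -> (i < 6)%nat -> (j < 6)%nat ->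
  pd i (pd j f) x = pd j (pd i f) x.
Proof.
  intros HU Hf Hx Hi Hj. destruct (Nat.eq_dec i j) as [E|E].
  - subst; reflexivity.
  - apply (schwarz_ne U HU x i j); auto.
Qed.

Definition S (F : nat -> R) := sum_f_R0 F 5.

Lemma S_ext F G : (forall i, (i < 6)%nat -> F i = G i) -> S F = S G.
Proof. intro H. apply sum_eq. intros i Hi. apply H. lia. Qed.

Lemma S_plus' F G : S F + S G = S (fun i => F i + G i).
Proof. unfold S. rewrite sum_plus. reflexivity. Qed.

Lemma S_opp F : S (fun i => - F i) = - S F.
Proof. unfold S; simpl; ring. Qed.

Lemma S_zero F : (forall i, (i < 6)%nat -> F i = 0) -> S F = 0.
Proof. intro H. unfold S; simpl. rewrite !H by lia. ring. Qed.

Lemma inner1 (X : nat -> R) (Y : nat -> nat -> R) (Z : nat -> R) :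
  S (fun i => S (fun j => X i * Y i j * Z j)) = S (fun i => X i * S (fun j => Y i j * Z j)).
Proof. unfold S; simpl; ring. Qed.

Lemma dfac (X : nat -> R) (Y : nat -> nat -> R) (Z : nat -> R) :
  S (fun k => S (fun l => X k * Y k l * Z l)) = S (fun l => S (fun k => X k * Y k l) * Z l).
Proof. unfold S; simpl; ring. Qed.

Lemma S_swap (F : nat -> nat -> R) :
  S (fun i => S (fun j => F i j)) = S (fun j => S (fun i => F i j)).
Proof. unfold S; simpl; ring. Qed.

Lemma S_scal r F : r * S F = S (fun i => r * F i).
Proof. unfold S; simpl; ring. Qed.

Lemma rot3 (F : nat -> nat -> nat -> R) :
  S (fun k => S (fun i => S (fun j => F k i j))) = S (fun j => S (fun k => S (fun i => F k i j))).
Proof.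
  transitivity (S (fun k => S (fun j => S (fun i => F k i j)))).
  - apply S_ext; intros k _. apply S_swap.
  - apply (S_swap (fun k j => S (fun i => F k i j))).
Qed.

Lemma fin_sym (v w : nat -> R) (B : nat -> nat -> R) :
  (forall i j, (i < 6)%nat -> (j < 6)%nat -> B i j = B j i) ->
  S (fun l => v l * S (fun i => B i l * w i)) + S (fun l => - w l * S (fun j => v j * B j l)) = 0.
Proof.
  intro HB. unfold S; simpl.
  rewrite (HB 1%nat 0%nat), (HB 2%nat 0%nat), (HB 3%nat 0%nat), (HB 4%nat 0%nat), (HB 5%nat 0%nat),
    (HB 2%nat 1%nat), (HB 3%nat 1%nat), (HB 4%nat 1%nat), (HB 5%nat 1%nat), (HB 3%nat 2%nat),
    (HB 4%nat 2%nat), (HB 5%nat 2%nat), (HB 4%nat 3%nat), (HB 5%nat 3%nat), (HB 5%nat 4%nat) by lia.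
  ring.
Qed.

Lemma L2k (k : nat) (a b c : nat -> R) (p : nat -> nat -> R) (dp : nat -> nat -> nat -> R) :
  S (fun l => a k * p k l * S (fun i => S (fun j => b i * dp i j l * c j))) =
  S (fun i => S (fun j => a k * b i * c j * S (fun l => p k l * dp i j l))).
Proof.
  transitivity (S (fun l => S (fun i => S (fun j => a k * b i * c j * (p k l * dp i j l))))).
  { apply S_ext; intros l _. rewrite S_scal. apply S_ext; intros i _. rewrite S_scal.
    apply S_ext; intros j _. ring. }
  rewrite (S_swap (fun l i => S (fun j => a k * b i * c j * (p k l * dp i j l)))).
  apply S_ext; intros i _.
  rewrite (S_swap (fun l j => a k * b i * c j * (p k l * dp i j l))).
  apply S_ext; intros j _. rewrite S_scal. reflexivity.
Qed.

Section Alg.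
Variables (p : nat -> nat -> R) (dp : nat -> nat -> nat -> R).

Definition Dd b (b2 : nat -> nat -> R) c (c2 : nat -> nat -> R) l :=
  S (fun i => S (fun j => b2 i l * p i j * c j + b i * dp i j l * c j + b i * p i j * c2 j l)).
Definition T a b b2 c c2 := S (fun k => S (fun l => a k * p k l * Dd b b2 c c2 l)).
Definition T1 a (B : nat -> nat -> R) c :=
  S (fun k => S (fun l => a k * p k l * S (fun i => S (fun j => B i l * p i j * c j)))).
Definition T2 a b c :=
  S (fun k => S (fun l => a k * p k l * S (fun i => S (fun j => b i * dp i j l * c j)))).
Definition T3 a b (C : nat -> nat -> R) :=
  S (fun k => S (fun l => a k * p k l * S (fun i => S (fun j => b i * p i j * C j l)))).
Definition X k i j := S (fun l => p k l * dp i j l).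

Lemma decomp a b b2 c c2 : T a b b2 c c2 = T1 a b2 c + T2 a b c + T3 a b c2.
Proof.
  unfold T, T1, T2, T3, Dd. rewrite !S_plus'. apply S_ext; intros k _.
  rewrite !S_plus'. apply S_ext; intros l _.
  rewrite <- !Rmult_plus_distr_l. f_equal.
  rewrite !S_plus'. apply S_ext; intros i _. rewrite !S_plus'. reflexivity.
Qed.

Hypothesis Hp : forall i j, (i < 6)%nat -> (j < 6)%nat -> p i j = - p j i.

Lemma hess a B c : (forall i j, (i < 6)%nat -> (j < 6)%nat -> B i j = B j i) ->
  T1 a B c + T3 c a B = 0.
Proof.
  intro HB. unfold T1, T3.
  transitivity (S (fun l => S (fun k => a k * p k l) * S (fun i => B i l * S (fun j => p i j * c j)))
    + S (fun l => - S (fun j => p l j * c j) * S (fun j => S (fun i => a i * p i j) * B j l))).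
  2: { apply (fin_sym (fun l => S (fun k => a k * p k l)) (fun i => S (fun j => p i j * c j)) B HB). }
  f_equal.
  - rewrite <- dfac. apply S_ext; intros k _. apply S_ext; intros l _. f_equal.
    rewrite inner1. reflexivity.
  - transitivity (S (fun l => S (fun k => c k * p k l) * S (fun j => S (fun i => a i * p i j) * B j l))).
    + rewrite <- dfac. apply S_ext; intros k _. apply S_ext; intros l _. f_equal.
      rewrite dfac. reflexivity.
    + apply S_ext; intros l Hl. f_equal. rewrite <- S_opp. apply S_ext; intros k Hk.
      rewrite (Hp k l Hk Hl). ring.
Qed.

Lemma T2_form a b c : T2 a b c = S (fun k => S (fun i => S (fun j => a k * b i * c j * X k i j))).
Proof. unfold T2, X. apply S_ext; intros k _. apply L2k. Qed.

Hypothesis HJ : forall k i j, (k < 6)%nat -> (i < 6)%nat -> (j < 6)%nat ->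
  S (fun l => p k l * dp i j l + p i l * dp j k l + p j l * dp k i l) = 0.

Lemma dp_part a b c : T2 a b c + T2 b c a + T2 c a b = 0.
Proof.
  rewrite !T2_form.
  rewrite (rot3 (fun k i j => b k * c i * a j * X k i j)).
  rewrite (rot3 (fun k i j => c k * a i * b j * X k i j)).
  rewrite (rot3 (fun k i j => c i * a j * b k * X i j k)).
  rewrite !S_plus'. apply S_zero; intros k Hk.
  rewrite !S_plus'. apply S_zero; intros i Hi.
  rewrite !S_plus'. apply S_zero; intros j Hj.
  transitivity (a k * b i * c j * (X k i j + X i j k + X j k i)); [ring|].
  unfold X. rewrite !S_plus'. rewrite (HJ k i j Hk Hi Hj). ring.
Qed.

Lemma jacobi_alg a b c a2 b2 c2 :
  (forall i j, (i < 6)%nat -> (j < 6)%nat -> a2 i j = a2 j i) ->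
  (forall i j, (i < 6)%nat -> (j < 6)%nat -> b2 i j = b2 j i) ->
  (forall i j, (i < 6)%nat -> (j < 6)%nat -> c2 i j = c2 j i) ->
  T a b b2 c c2 + T b c c2 a a2 + T c a a2 b b2 = 0.
Proof.
  intros Ha Hb Hc. rewrite !decomp.
  pose proof (hess a b2 c Hb). pose proof (hess b c2 a Hc). pose proof (hess c a2 b Ha).
  pose proof (dp_part a b c). lra.
Qed.
End Alg.

Section Jred.
Variables (p : nat -> nat -> R) (dp : nat -> nat -> nat -> R).
Definition Jc k i j := S (fun l => p k l * dp i j l + p i l * dp j k l + p j l * dp k i l).

Lemma J_cyc k i j : Jc k i j = Jc i j k.
Proof. unfold Jc. apply S_ext; intros; ring. Qed.

Hypothesis Hdp : forall i j l, (i < 6)%nat -> (j < 6)%nat -> (l < 6)%nat -> dp i j l = - dp j i l.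

Lemma J_swap k i j : (k < 6)%nat -> (i < 6)%nat -> (j < 6)%nat -> Jc i k j = - Jc k i j.
Proof.
  intros Hk Hi Hj. unfold Jc. rewrite <- S_opp. apply S_ext; intros l Hl.
  rewrite (Hdp k j l), (Hdp j i l), (Hdp i k l) by auto. ring.
Qed.

Lemma J_sorted : (forall k i j, (k < i)%nat -> (i < j)%nat -> (j < 6)%nat -> Jc k i j = 0) ->
  forall k i j, (k < 6)%nat -> (i < 6)%nat -> (j < 6)%nat -> Jc k i j = 0.
Proof.
  intros H0.
  assert (Hkk : forall k j, (k < 6)%nat -> (j < 6)%nat -> Jc k k j = 0).
  { intros k j Hk Hj. pose proof (J_swap k k j Hk Hk Hj). lra. }
  intros k i j Hk Hi Hj.
  destruct (Nat.eq_dec k i) as [E|E]; [subst; auto|].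
  destruct (Nat.eq_dec i j) as [E2|E2].
  { subst. rewrite J_cyc. apply Hkk; auto. }
  destruct (Nat.eq_dec k j) as [E3|E3].
  { subst. rewrite J_cyc, J_cyc. apply Hkk; auto. }
  destruct (Nat.lt_ge_cases k i); destruct (Nat.lt_ge_cases i j); destruct (Nat.lt_ge_cases k j);
  first [ lia
        | apply H0; lia
        | rewrite J_cyc, J_cyc; apply H0; lia
        | rewrite J_cyc; apply H0; lia
        | rewrite (J_swap i k j) by auto; rewrite (H0 i k j) by lia; ring
        | rewrite J_cyc; rewrite (J_swap j i k) by auto; rewrite J_cyc, J_cyc; rewrite (H0 k j i) by lia; ring
        | rewrite J_cyc; rewrite (J_swap j i k) by auto; rewrite (H0 j i k) by lia; ring ].
Qed.
End Jred.

Definition ESub a b := EAdd a (EOpp b).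
Definition EDiv a b := EMul a (EInv b).
Definition eRho := ESqrt (EAdd (EPow (EV 3) 2) (EPow (EV 4) 2)).

Section Conc.
Variables c N n n1 n2 : R.

Definition eMu1 := EMul (EC c) (EAdd (ESub (EAdd (EAdd (ESub (EMul (EOpp (EC n)) (EV 3)) (EMul (EC n1) (EPow (EV 3) 2)))
   (EMul (EMul (EC 2) (EC n1)) (EPow (EV 4) 2))) (EMul (EC n1) (EPow (EV 5) 2)))
   (EMul (EMul (EMul (EC 3) (EC n2)) (EV 3)) (EV 4))) (EDiv (EMul (EC N) (EV 3)) (EPow eRho 3))).
Definition eMu2 := EMul (EC c) (EAdd (ESub (EAdd (ESub (EAdd (EMul (EOpp (EC n)) (EV 4)) (EMul (EMul (EC 2) (EC n2)) (EPow (EV 3) 2)))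
   (EMul (EC n2) (EPow (EV 4) 2))) (EMul (EC n2) (EPow (EV 5) 2)))
   (EMul (EMul (EMul (EC 3) (EC n1)) (EV 3)) (EV 4))) (EDiv (EMul (EC N) (EV 4)) (EPow eRho 3))).
Definition eMu3 := EMul (EMul (EOpp (EC c)) (EV 5)) (EAdd (EAdd (EAdd (EMul (EC 3) (EC n)) (EMul (EMul (EC 5) (EC n1)) (EV 3)))
   (EMul (EMul (EC 5) (EC n2)) (EV 4))) (EDiv (EMul (EC N) (EV 5)) eRho)).

Lemma mu1_eval x : mu1 c N n n1 n2 x = eval eMu1 x.
Proof. reflexivity. Qed.
Lemma mu2_eval x : mu2 c N n n1 n2 x = eval eMu2 x.
Proof. reflexivity. Qed.
Lemma mu3_eval x : mu3 c N n n1 n2 x = eval eMu3 x.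
Proof. reflexivity. Qed.

Definition eCas :=
  EAdd (EAdd (EAdd (EAdd (EMul (EV 0) (EV 3)) (EMul (EV 1) (EV 4))) (EMul (EV 2) (EV 5)))
   (EMul (EMul (EC c) (EAdd (EAdd (EC n) (EMul (EC n1) (EV 3))) (EMul (EC n2) (EV 4))))
      (EAdd (EAdd (EMul (EC 2) (EPow (EV 3) 2)) (EMul (EC 2) (EPow (EV 4) 2))) (EPow (EV 5) 2))))
   (EMul (EMul (EMul (EInv (EC 2)) (EC c)) (EC N))
     (ESub (EDiv (ESub (EMul (EV 5) (EPow eRho 2)) (EC 2)) eRho)
        (EMul (EAdd (EPow eRho 2) (EPow (EV 5) 2)) (EAtan (EDiv (EV 5) eRho))))).

Lemma Cas_eval x : Cas c N n n1 n2 x = eval eCas x.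
Proof.
  unfold Cas, rho. cbn [eval eCas eRho ESub EDiv].
  rewrite pow2_sqrt by (pose proof (pow2_ge_0 (x 3%nat)); pose proof (pow2_ge_0 (x 4%nat)); lra).
  reflexivity.
Qed.
End Conc.

Section Conc2.
Variables c N n n1 n2 : R.
Definition ePi (i j : nat) : ex :=
  match (i, j) with
  | (0, 1)%nat => ESub (EOpp (EV 2)) (eMu3 c N n n1 n2) | (0, 2)%nat => EAdd (EV 1) (eMu2 c N n n1 n2)
  | (0, 4)%nat => EOpp (EV 5) | (0, 5)%nat => EV 4
  | (1, 0)%nat => EAdd (EV 2) (eMu3 c N n n1 n2) | (1, 2)%nat => ESub (EOpp (EV 0)) (eMu1 c N n n1 n2)
  | (1, 3)%nat => EV 5 | (1, 5)%nat => EOpp (EV 3)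
  | (2, 0)%nat => ESub (EOpp (EV 1)) (eMu2 c N n n1 n2) | (2, 1)%nat => EAdd (EV 0) (eMu1 c N n n1 n2)
  | (2, 3)%nat => EOpp (EV 4) | (2, 4)%nat => EV 3
  | (3, 1)%nat => EOpp (EV 5) | (3, 2)%nat => EV 4
  | (4, 0)%nat => EV 5 | (4, 2)%nat => EOpp (EV 3)
  | (5, 0)%nat => EOpp (EV 4) | (5, 1)%nat => EV 3
  | _ => EC 0
  end.

Definition PiC := Pi (mu1 c N n n1 n2) (mu2 c N n n1 n2) (mu3 c N n n1 n2).

Lemma Pi_eval x i j : PiC x i j = eval (ePi i j) x.
Proof.
  unfold PiC, Pi, ePi.
  destruct i as [|[|[|[|[|[|i]]]]]]; destruct j as [|[|[|[|[|[|j]]]]]]; reflexivity.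
Qed.
End Conc2.

Section Main.
Variables c N n n1 n2 : R.
Let P := PiC c N n n1 n2.
Let dP x i j l := eval (deriv (ePi c N n n1 n2 i j) l) x.

Lemma P_anti x i j : P x i j = - P x j i.
Proof.
  unfold P. rewrite !Pi_eval.
  destruct i as [|[|[|[|[|[|i]]]]]]; destruct j as [|[|[|[|[|[|j]]]]]]; cbn [ePi eval ESub]; ring.
Qed.

Lemma dP_anti x i j l : dP x i j l = - dP x j i l.
Proof.
  unfold dP.
  destruct i as [|[|[|[|[|[|i]]]]]]; destruct j as [|[|[|[|[|[|j]]]]]]; cbn [ePi deriv eval ESub]; ring.
Qed.

Ltac jtac :=
  unfold Jc, S, dP, P, PiC, Pi, mu1, mu2, mu3, rho; simpl;
  let s := fresh "s" in set (s := sqrt _) in *;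
  field; repeat split; nra.

Lemma J_zero x : Dom x -> forall k i j, (k < 6)%nat -> (i < 6)%nat -> (j < 6)%nat ->
  Jc (P x) (dP x) k i j = 0.
Proof.
  intro HD. apply J_sorted.
  - intros; apply dP_anti.
  - unfold Dom in HD.
    assert (Hs : 0 < sqrt (x 3%nat ^ 2 + x 4%nat ^ 2)) by (apply sqrt_lt_R0; lra).
    intros k i j Hki Hij Hj.
    destruct k as [|[|[|[|[|[|k]]]]]]; try lia;
    destruct i as [|[|[|[|[|[|i]]]]]]; try lia;
    destruct j as [|[|[|[|[|[|j]]]]]]; try lia; jtac.
Qed.
End Main.

Ltac goodtac x HD :=
  unfold Dom in HD; simpl in HD |- *;
  assert (Hs : 0 < sqrt (x 3%nat * (x 3%nat * 1) + x 4%nat * (x 4%nat * 1))) by (apply sqrt_lt_R0; lra);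
  set (s := sqrt _) in *;
  repeat split; try lra; try (apply Rgt_not_eq; apply Rlt_gt; repeat apply Rmult_lt_0_compat; lra).

Lemma good_ePi c N n n1 n2 x i j : Dom x -> good (ePi c N n n1 n2 i j) x.
Proof.
  intro HD.
  destruct i as [|[|[|[|[|[|i]]]]]]; destruct j as [|[|[|[|[|[|j]]]]]]; try exact I;
  cbn [ePi good ESub EDiv]; goodtac x HD.
Qed.

Lemma good_eCas c N n n1 n2 x : Dom x -> good (eCas c N n n1 n2) x.
Proof. intro HD. unfold eCas. goodtac x HD. Qed.

Lemma dsum (F : nat -> R -> R) (dF : nat -> R) a n :
  (forall i, (i <= n)%nat -> derivable_pt_lim (F i) a (dF i)) ->
  derivable_pt_lim (fun t => sum_f_R0 (fun i => F i t) n) a (sum_f_R0 dF n).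
Proof.
  induction n as [|n IH]; intro H.
  - simpl. apply H; lia.
  - simpl. apply (derivable_pt_lim_plus (fun t => sum_f_R0 (fun i => F i t) n) (F (Datatypes.S n))).
    + apply IH. intros; apply H; lia.
    + apply H; lia.
Qed.

Lemma D_mult3 (A B C : R -> R) a la lb lc :
  derivable_pt_lim A a la -> derivable_pt_lim B a lb -> derivable_pt_lim C a lc ->
  derivable_pt_lim (fun t => A t * B t * C t) a (la * B a * C a + A a * lb * C a + A a * B a * lc).
Proof.
  intros HA HB HC. eapply dlim_eq.
  - apply (derivable_pt_lim_mult (fun t => A t * B t) C _ _ _ (derivable_pt_lim_mult A B a la lb HA HB) HC).
  - unfold mult_fct. ring.
Qed.

Lemma bracket_S P f g x :
  bracket P f g x = S (fun k => S (fun l => pd k f x * P x k l * pd l g x)).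
Proof. reflexivity. Qed.

Section Br.
Variables c N n n1 n2 : R.
Let P := PiC c N n n1 n2.
Let dP x i j l := eval (deriv (ePi c N n n1 n2 i j) l) x.

Lemma has_pd2 g x i l : Ck Dom 2 g -> Dom x -> (i < 6)%nat -> (l < 6)%nat -> has_pd l (pd i g) x.
Proof.
  intros Hg Hx Hi Hl. simpl in Hg. destruct Hg as [_ Hg].
  destruct (Hg i Hi) as [_ [_ H2]]. destruct (H2 l Hl) as [H3 _]. apply H3; auto.
Qed.

Lemma pd_bracket g h x l : Ck Dom 2 g -> Ck Dom 2 h -> Dom x -> (l < 6)%nat ->
  pd l (bracket P g h) x =
  Dd (P x) (dP x) (fun i => pd i g x) (fun i l => pd l (pd i g) x)
     (fun j => pd j h x) (fun j l => pd l (pd j h) x) l.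
Proof.
  intros Hg Hh Hx Hl. apply pd_unique. unfold bracket, Dd, S.
  apply dsum; intros i Hi. apply dsum; intros j Hj.
  eapply dlim_eq.
  - apply D_mult3.
    + apply pd_spec. apply has_pd2; auto; lia.
    + apply (dlim_fext (fun t => eval (ePi c N n n1 n2 i j) (upd x l t))).
      * intro t. unfold P. rewrite Pi_eval. reflexivity.
      * apply line_deriv. apply good_ePi; auto.
    + apply pd_spec. apply has_pd2; auto; lia.
  - cbv beta. rewrite upd_same. unfold P, dP. rewrite Pi_eval. reflexivity.
Qed.

Theorem poisson : Poisson_on Dom P.
Proof.
  intros f g h Hf Hg Hh x Hx.
  assert (E : forall u v w, smooth_on Dom u -> smooth_on Dom v -> smooth_on Dom w ->
     bracket P u (bracket P v w) x =
     T (P x) (dP x) (fun i => pd i u x) (fun i => pd i v x) (fun i l => pd l (pd i v) x)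
       (fun j => pd j w x) (fun j l => pd l (pd j w) x)).
  { intros u v w Hu Hv Hw. rewrite bracket_S. unfold T.
    apply S_ext; intros k Hk. apply S_ext; intros l Hl. f_equal.
    apply pd_bracket; auto. }
  rewrite (E f g h), (E g h f), (E h f g); auto.
  apply jacobi_alg.
  - intros i j Hi Hj. apply P_anti.
  - intros k i j Hk Hi Hj. apply (J_zero c N n n1 n2 x Hx); auto.
  - intros i j Hi Hj. apply (schwarz Dom); auto. apply Dom_open.
  - intros i j Hi Hj. apply (schwarz Dom); auto. apply Dom_open.
  - intros i j Hi Hj. apply (schwarz Dom); auto. apply Dom_open.
Qed.
End Br.

Lemma cas_rows c N n n1 n2 x i : Dom x -> (i < 6)%nat ->
  sum_f_R0 (fun j => PiC c N n n1 n2 x i j * eval (deriv (eCas c N n n1 n2) j) x) 5 = 0.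
Proof.
  intros HD Hi. unfold Dom in HD.
  assert (Hs : 0 < sqrt (x 3%nat ^ 2 + x 4%nat ^ 2)) by (apply sqrt_lt_R0; lra).
  destruct i as [|[|[|[|[|[|i]]]]]]; try lia;
  unfold PiC, Pi, mu1, mu2, mu3, rho; simpl;
  set (s := sqrt _) in *; field; repeat split; nra.
Qed.

Theorem casimir c N n n1 n2 : Casimir_on Dom (PiC c N n n1 n2) (Cas c N n n1 n2).
Proof.
  assert (EC : Cas c N n n1 n2 = eval (eCas c N n n1 n2)).
  { apply functional_extensionality. apply Cas_eval. }
  rewrite EC. split.
  - intro k. apply smooth_eval; [apply Dom_open|]. intros x Hx. apply good_eCas; auto.
  - intros x Hx i Hi. rewrite <- (cas_rows c N n n1 n2 x i Hx Hi).
    apply sum_eq. intros j Hj. rewrite pd_eval; auto. apply good_eCas; auto.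
Qed.

Theorem mainTheorem9 (c N n n1 n2 : R) :
  Poisson_on Dom (Pi (mu1 c N n n1 n2) (mu2 c N n n1 n2) (mu3 c N n n1 n2)) /\
  Casimir_on Dom (Pi (mu1 c N n n1 n2) (mu2 c N n n1 n2) (mu3 c N n n1 n2))
    (Cas c N n n1 n2).
Proof. split; [apply poisson | apply casimir]. Qed.
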